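(* Let $p\in(0,1)$ and $d\ge2$ an integer. Define the path $$\gamma_1=\Big\{-1+\frac{\sin(\phi(d-1))}{\sin(\phi d)}e^{i\phi}:\ \phi\in[0,\pi/d)\Big\}$$ (the point at $\phi=0$ being $-1/d$, by continuity). Then $v(1+v)^{d-1}\in\mathbb{R}$ for all $v\in\gamma_1$. Moreover, for every $v\in\gamma_1$ and every solution $u$ of $u(1+u)^{d-1}=v(1+v)^{d-1}$ with $u\notin\{v,\bar v\}$, $$\big|u(1/p+u)^{d/p-1}\big|\neq\big|v(1/p+v)^{d/p-1}\big|.$$
   Context: $|z(1/p+z)^{d/p-1}|$ means $|z|\,|1/p+z|^{d/p-1}$. *)

(* Defs.v *)
From Stdlib Require Import Reals.
From Coquelicot Require Import Coquelicot.
Open Scope R_scope.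

(* Nonnegative base, real exponent: a^x := exp(x ln a) for a > 0, and 0^x := 0
   (only used with exponent x > 0, where this is the continuous extension). *)
Definition rpow (a x : R) : R := if Rle_dec a 0 then 0 else Rpower a x.

Definition gamma1 (d : nat) (phi : R) : C :=
  if Req_EM_T phi 0 then RtoC (- / INR d)
  else (RtoC (-1) + RtoC (sin (phi * (INR d - 1)) / sin (phi * INR d))
                    * (RtoC (cos phi) + Ci * RtoC (sin phi)))%C.

Definition Fd (d : nat) (z : C) : C := (z * (1 + z) ^ (d - 1))%C.

(* |z (1/p + z)^(d/p - 1)| = |z| |1/p + z|^(d/p - 1) *)
Definition Gp (d : nat) (p : R) (z : C) : R :=
  Cmod z * rpow (Cmod (RtoC (/ p) + z)%C) (INR d / p - 1).

(* Main.v *)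
Require Import Defs.
From Stdlib Require Import Reals Lra Lia.
From Coquelicot Require Import Coquelicot.
Open Scope R_scope.


Lemma xcos_lt_sin x : 0 < x < PI -> x * cos x < sin x.
Proof.
  intros [H1 H2].
  destruct (MVT_cor2 (fun y => sin y - y * cos y) (fun y => y * sin y) 0 x H1) as [c [Hc1 Hc2]].
  { intros c _. apply is_derive_Reals. auto_derive; auto. ring. }
  rewrite sin_0, Rmult_0_l, Rminus_0_r, Rminus_0_r in Hc1.
  assert (0 < sin c) by (apply sin_gt_0; lra).
  assert (0 < c * sin c * x) by (apply Rmult_lt_0_compat; [apply Rmult_lt_0_compat|]; lra).
  lra.
Qed.

Lemma sin_n_le n x : Rabs (sin (INR n * x)) <= INR n * Rabs (sin x).
Proof.
  induction n.
  - simpl. rewrite Rmult_0_l, sin_0, Rabs_R0. lra.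
  - rewrite S_INR. replace ((INR n + 1) * x) with (INR n * x + x) by ring.
    rewrite sin_plus.
    eapply Rle_trans. apply Rabs_triang.
    rewrite !Rabs_mult.
    assert (Rabs (cos x) <= 1) by (apply Rabs_le; apply COS_bound).
    assert (Rabs (cos (INR n * x)) <= 1) by (apply Rabs_le; apply COS_bound).
    assert (0 <= Rabs (sin (INR n * x))) by apply Rabs_pos.
    assert (0 <= Rabs (sin x)) by apply Rabs_pos.
    nra.
Qed.

Lemma pow_lt_strict n x y : 0 <= x < y -> x ^ S n < y ^ S n.
Proof.
  intros H. induction n.
  - simpl. lra.
  - change (x ^ S (S n)) with (x * x ^ S n). change (y ^ S (S n)) with (y * y ^ S n).
    assert (0 <= x ^ S n) by (apply pow_le; lra).
    nra.
Qed.

Lemma pow_1_cmp n x : 0 < x -> 0 <= (x ^ S n - 1) * (x - 1).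
Proof.
  intros Hx. destruct (Rle_lt_dec x 1).
  - assert (x ^ S n <= 1 ^ S n) by (apply pow_incr; lra). rewrite pow1 in H. nra.
  - assert (1 <= x ^ S n) by (apply pow_R1_Rle; lra). nra.
Qed.

Lemma bern_gt m x : 0 < x -> x <> 1 ->
  0 < INR (S m) * x ^ (S (S m)) - INR (S (S m)) * x ^ (S m) + 1.
Proof.
  intros Hx Hx1. induction m.
  - simpl. assert (0 < (x - 1) * (x - 1)).
    { destruct (Rlt_dec x 1).
      - assert (0 < 1 - x) by lra. nra.
      - assert (0 < x - 1) by lra. nra. }
    nra.
  - assert (E : INR (S (S m)) * x ^ S (S (S m)) - INR (S (S (S m))) * x ^ S (S m) + 1
             = x * (INR (S m) * x ^ S (S m) - INR (S (S m)) * x ^ (S m) + 1) + (x ^ S (S m) - 1) * (x - 1)).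
    { rewrite !S_INR. simpl. ring. }
    rewrite E.
    pose proof (pow_1_cmp (S m) x Hx).
    nra.
Qed.

Definition ystar (n : nat) := INR n / (INR n + 1).
Definition t0sq (n : nat) := (ystar n ^ n / (INR n + 1)) ^ 2.
Definition hpoly (n : nat) (tau R : R) := (INR n + 1) * R ^ S n - INR n * R ^ n + INR n * (INR n + 1) * tau.

Lemma h_pos m tau R : 0 < R -> t0sq (S m) <= tau ->
  (t0sq (S m) < tau \/ R <> ystar (S m) ^ 2) -> 0 < hpoly (S m) tau R.
Proof.
  intros HR Ht Hor.
  set (n := S m) in *.
  assert (HN : 0 < INR n) by (apply lt_0_INR; unfold n; lia).
  set (y := ystar n) in *.
  assert (Hy : 0 < y) by (unfold y, ystar; apply Rdiv_lt_0_compat; lra).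
  set (x := R / (y ^ 2)).
  assert (Hx : 0 < x) by (unfold x; apply Rdiv_lt_0_compat; [lra| apply pow_lt; lra]).
  assert (ER : R = y * y * x) by (unfold x; field; lra).
  assert (E : hpoly n tau R = y * y ^ n * y ^ n *
     (INR n * x ^ S n - INR (S n) * x ^ n + 1) + INR n * (INR n + 1) * (tau - t0sq n)).
  { unfold hpoly, t0sq. fold y. rewrite ER. rewrite S_INR.
    change ((y*y*x) ^ S n) with ((y*y*x) * (y*y*x)^n). change (x ^ S n) with (x * x ^ n).
    rewrite !Rpow_mult_distr. set (Y := y ^ n). set (X := x ^ n).
    unfold y, ystar. field. lra. }
  rewrite E.
  assert (0 < y * y ^ n * y ^ n) by (apply Rmult_lt_0_compat; [apply Rmult_lt_0_compat|]; try apply pow_lt; lra).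
  assert (HN1 : 0 < INR n * (INR n + 1)) by nra.
  destruct (Req_dec x 1) as [Hx1|Hx1].
  - destruct Hor as [Hlt|Hne].
    + assert (0 <= INR n * x ^ S n - INR (S n) * x ^ n + 1).
      { rewrite Hx1, !pow1, S_INR. lra. }
      assert (0 < INR n * (INR n + 1) * (tau - t0sq n)) by (apply Rmult_lt_0_compat; lra).
      nra.
    + exfalso. apply Hne. rewrite ER, Hx1. ring.
  - pose proof (bern_gt m x Hx Hx1). fold n in H0.
    assert (0 <= INR n * (INR n + 1) * (tau - t0sq n)) by (apply Rmult_le_pos; lra).
    nra.
Qed.

Definition Nf (n : nat) (a tau R : R) := (1+a)*R + a + a^2 - a*tau/R^n.
Definition Psi (n : nat) (a tau R : R) :=
  ((INR n + 1) * (1 + a) - 1) * ln (Nf n a tau R) - INR n * ln R.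

Lemma Psi_deriv m a tau c : 0 < a -> 0 < c -> 0 < Nf (S m) a tau c ->
  derivable_pt_lim (Psi (S m) a tau) c
    (a * (1 + a) * hpoly (S m) tau c / (c ^ S (S m) * Nf (S m) a tau c)).
Proof.
  intros Ha Hc HN.
  apply is_derive_Reals. unfold Psi.
  assert (Hm : 0 < c ^ m) by (apply pow_lt; lra).
  unfold Nf at 1 2. auto_derive.
  - repeat split; try lra; try (intro HH; nra). unfold Nf in HN. 
    replace (a * (a * 1)) with (a ^ 2) by ring. unfold Rminus, Rdiv in HN. exact HN.
  - unfold Nf, hpoly in *. change (Init.Nat.pred (S m)) with m. set (K := INR (S m)).
    change (c ^ S (S m)) with (c * (c * c ^ m)).
    change (c ^ S m) with (c * c ^ m) in *.
    set (M := c ^ m) in *.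
    assert (HN' : (1 + a) * c + a + a ^ 2 - a * tau / (c * M) <> 0) by lra.
    assert (HcM : 0 < c * M) by nra.
    assert (HP : 0 < ((1 + a) * c + a + a ^ 2) * (c * M) - a * tau).
    { replace (((1 + a) * c + a + a ^ 2) * (c * M) - a * tau) with
        (((1 + a) * c + a + a ^ 2 - a * tau / (c * M)) * (c * M)) by (field; lra).
      nra. }
    change (match m with 0%nat => 1 | S _ => INR m + 1 end) with K. field. repeat split; lra.
Qed.

Lemma Nf_mono m a tau R R' : 0 < a -> 0 <= tau -> 0 < R <= R' ->
  Nf (S m) a tau R <= Nf (S m) a tau R'.
Proof.
  intros Ha Ht [HR HRR]. unfold Nf.
  assert (0 < R ^ S m) by (apply pow_lt; lra).
  assert (R ^ S m <= R' ^ S m) by (apply pow_incr; lra).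
  assert (/ R' ^ S m <= / R ^ S m) by (apply Rinv_le_contravar; lra).
  unfold Rdiv.
  assert (0 <= a * tau) by nra.
  nra.
Qed.

Lemma Psi_lt m a tau lo hi : 0 < a -> 0 <= tau -> 0 < lo -> lo < hi ->
  0 < Nf (S m) a tau lo ->
  (forall c, lo < c < hi -> 0 < hpoly (S m) tau c) ->
  Psi (S m) a tau lo < Psi (S m) a tau hi.
Proof.
  intros Ha Ht Hlo Hlh HN Hh.
  destruct (MVT_cor2 (Psi (S m) a tau)
    (fun c => a * (1 + a) * hpoly (S m) tau c / (c ^ S (S m) * Nf (S m) a tau c)) lo hi Hlh)
    as [c [Hc1 Hc2]].
  { intros c Hc. apply Psi_deriv; try lra.
    eapply Rlt_le_trans. exact HN. apply Nf_mono; lra. }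
  assert (0 < Nf (S m) a tau c) by (eapply Rlt_le_trans; [exact HN| apply Nf_mono; lra]).
  assert (0 < c ^ S (S m)) by (apply pow_lt; lra).
  assert (0 < hpoly (S m) tau c) by (apply Hh; lra).
  assert (0 < a * (1 + a) * hpoly (S m) tau c / (c ^ S (S m) * Nf (S m) a tau c)).
  { apply Rdiv_lt_0_compat. apply Rmult_lt_0_compat; [nra|lra]. nra. }
  assert (0 < a * (1 + a) * hpoly (S m) tau c / (c ^ S (S m) * Nf (S m) a tau c) * (hi - lo)).
  { apply Rmult_lt_0_compat; lra. }
  lra.
Qed.

Lemma Psi_inj m a tau R1 R2 : 0 < a -> 0 < tau -> t0sq (S m) <= tau ->
  0 < R1 -> 0 < R2 -> 0 < Nf (S m) a tau R1 -> 0 < Nf (S m) a tau R2 -> R1 <> R2 ->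
  (t0sq (S m) < tau \/ R2 = ystar (S m) ^ 2) ->
  Psi (S m) a tau R1 <> Psi (S m) a tau R2.
Proof.
  intros Ha Ht Ht0 H1 H2 HN1 HN2 Hne Hor.
  destruct (Rlt_or_le R1 R2) as [Hl|Hl].
  - apply Rlt_not_eq. apply Psi_lt; try lra.
    intros c Hc. apply h_pos; [lra|lra|].
    destruct Hor as [Hor|Hor]; [left; lra| right; lra].
  - apply not_eq_sym. apply Rlt_not_eq. apply Psi_lt; try lra.
    intros c Hc. apply h_pos; [lra|lra|].
    destruct Hor as [Hor|Hor]; [left; lra| right; lra].
Qed.

Lemma Cmod_sq (z : C) : Cmod z ^ 2 = fst z ^ 2 + snd z ^ 2.
Proof.
  unfold Cmod. rewrite pow2_sqrt; [reflexivity|].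
  apply Rplus_le_le_0_compat; apply pow2_ge_0.
Qed.

Lemma Fd_mod m z : Cmod (Fd (S (S m)) z) ^ 2 = Cmod z ^ 2 * (Cmod (1 + z)%C ^ 2) ^ S m.
Proof.
  unfold Fd. replace (S (S m) - 1)%nat with (S m) by lia.
  rewrite Cmod_mult, Cmod_pow, Rpow_mult_distr, <- !pow_mult, Nat.mul_comm. reflexivity.
Qed.

Lemma de_moivre r phi n :
  Cpow (r * cos phi, r * sin phi) n = (r ^ n * cos (INR n * phi), r ^ n * sin (INR n * phi)).
Proof.
  induction n.
  - simpl. rewrite Rmult_0_l, cos_0, sin_0. unfold RtoC. f_equal; ring.
  - simpl Cpow. rewrite IHn. rewrite S_INR.
    replace ((INR n + 1) * phi) with (INR n * phi + phi) by ring.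
    rewrite cos_plus, sin_plus. unfold Cmult; simpl. f_equal; ring.
Qed.

Lemma real_pow x n : Cpow (x, 0) n = (x ^ n, 0).
Proof.
  induction n.
  - reflexivity.
  - simpl Cpow. rewrite IHn. unfold Cmult; simpl. f_equal; ring.
Qed.

Lemma bridge m a tau (z : C) : 0 < a -> 0 < tau -> Cmod (Fd (S (S m)) z) ^ 2 = tau ->
  0 < Cmod (1 + z)%C ^ 2 /\
  Cmod z ^ 2 = tau / (Cmod (1 + z)%C ^ 2) ^ S m /\
  Cmod (RtoC (1 + a) + z)%C ^ 2 = Nf (S m) a tau (Cmod (1 + z)%C ^ 2).
Proof.
  intros Ha Ht H. rewrite Fd_mod in H.
  set (R := Cmod (1 + z)%C ^ 2) in *.
  assert (HR0 : 0 <= R) by (unfold R; apply pow2_ge_0).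
  assert (HR : 0 < R).
  { destruct (Rle_lt_or_eq_dec 0 R HR0) as [|E]; [assumption|].
    rewrite <- E in H. rewrite pow_i in H by lia. lra. }
  assert (HRn : 0 < R ^ S m) by (apply pow_lt; lra).
  assert (Hz : Cmod z ^ 2 = tau / R ^ S m) by (rewrite <- H; field; lra).
  split; [exact HR|]. split; [exact Hz|].
  unfold Nf. replace (a * tau / R ^ S m) with (a * (tau / R ^ S m)) by (field; lra). rewrite <- Hz.
  unfold R. rewrite !Cmod_sq. destruct z as [x y]. simpl. ring.
Qed.

Lemma lnG m p a tau (z : C) : 0 < p -> a = / p - 1 -> 0 < a -> 0 < tau ->
  Cmod (Fd (S (S m)) z) ^ 2 = tau -> 0 < Gp (S (S m)) p z ->
  0 < Nf (S m) a tau (Cmod (1 + z)%C ^ 2) /\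
  2 * ln (Gp (S (S m)) p z) = ln tau + Psi (S m) a tau (Cmod (1 + z)%C ^ 2).
Proof.
  intros Hp Ha Ha0 Ht H HG.
  destruct (bridge m a tau z Ha0 Ht H) as [HR [Hz HN]].
  set (R := Cmod (1 + z)%C ^ 2) in *.
  assert (Eq : RtoC (/ p) = RtoC (1 + a)) by (f_equal; lra).
  unfold Gp in *. rewrite Eq in HG |- *.
  unfold rpow in *. destruct (Rle_dec (Cmod (RtoC (1 + a) + z)%C) 0) as [Hle|Hgt].
  { rewrite Rmult_0_r in HG. lra. }
  apply Rnot_le_lt in Hgt.
  assert (HP : 0 < Rpower (Cmod (RtoC (1 + a) + z)%C) (INR (S (S m)) / p - 1)) by (unfold Rpower; apply exp_pos).
  assert (Hz0 : 0 < Cmod z).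
  { pose proof (Cmod_ge_0 z). destruct (Rle_lt_or_eq_dec 0 _ H0) as [|E]; [assumption|].
    rewrite <- E in HG. lra. }
  split.
  { rewrite <- HN. apply pow_lt. exact Hgt. }
  rewrite ln_mult by assumption. rewrite ln_Rpower.
  unfold Psi. rewrite <- HN.
  assert (E1 : 2 * ln (Cmod z) = ln tau - INR (S m) * ln R).
  { replace (2 * ln (Cmod z)) with (INR 2 * ln (Cmod z)) by (simpl; ring).
    rewrite <- ln_pow by assumption. rewrite Hz. unfold Rdiv.
    rewrite ln_mult, ln_Rinv, ln_pow; try lra; try apply Rinv_0_lt_compat; apply pow_lt; lra. }
  assert (E2 : ln (Cmod (RtoC (1 + a) + z)%C ^ 2) = 2 * ln (Cmod (RtoC (1 + a) + z)%C)).
  { rewrite ln_pow by assumption. simpl. ring. }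
  rewrite E2.
  assert (Ee : INR (S (S m)) / p - 1 = (INR (S m) + 1) * (1 + a) - 1).
  { rewrite (S_INR (S m)). rewrite Ha. field. lra. }
  rewrite Ee. lra.
Qed.

Lemma Gp_pos m p (z : C) : 0 < Cmod z -> 0 < Cmod (RtoC (/ p) + z)%C -> 0 < Gp (S (S m)) p z.
Proof.
  intros H1 H2. unfold Gp, rpow.
  destruct (Rle_dec (Cmod (RtoC (/ p) + z)%C) 0); [lra|].
  apply Rmult_lt_0_compat; [lra|]. unfold Rpower; apply exp_pos.
Qed.

Lemma Cmod_pos_sq (z : C) : 0 < Cmod z ^ 2 -> 0 < Cmod z.
Proof.
  intros H. pose proof (Cmod_ge_0 z). destruct (Rle_lt_or_eq_dec 0 _ H0) as [|E]; [assumption|].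
  rewrite <- E in H. cbn [fst snd] in H. lra.
Qed.

Lemma v_case0 m p : 0 < p < 1 ->
  let v := RtoC (- / INR (S (S m))) in
  let tau := Cmod (Fd (S (S m)) v) ^ 2 in
  Im (Fd (S (S m)) v) = 0 /\ 0 < tau /\ t0sq (S m) <= tau /\
  (t0sq (S m) < tau \/ Cmod (1 + v)%C ^ 2 = ystar (S m) ^ 2) /\ 0 < Gp (S (S m)) p v.
Proof.
  intros Hp v tau.
  set (N := INR (S m)).
  assert (HD : INR (S (S m)) = N + 1) by (unfold N; apply S_INR).
  assert (HN : 0 < N) by (apply lt_0_INR; lia).
  assert (Ev : v = (- / (N + 1), 0)) by (unfold v; rewrite HD; reflexivity).
  assert (E1 : (1 + v)%C = (ystar (S m), 0)).
  { rewrite Ev. unfold Cplus, RtoC, ystar; cbn [fst snd]. fold N. f_equal; field; lra. }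
  assert (Hy : 0 < ystar (S m)) by (unfold ystar; fold N; apply Rdiv_lt_0_compat; lra).
  assert (Htau : tau = t0sq (S m)).
  { unfold tau. rewrite Fd_mod, E1, Ev, !Cmod_sq. cbn [fst snd].
    unfold t0sq. fold N. replace (ystar (S m) ^ 2 + 0 ^ 2) with (ystar (S m) ^ 2) by ring.
    rewrite <- pow_mult, Nat.mul_comm, pow_mult. field. lra. }
  assert (Ht0 : 0 < t0sq (S m)).
  { unfold t0sq. apply pow_lt. apply Rdiv_lt_0_compat; [apply pow_lt; exact Hy| fold N; lra]. }
  split; [|split; [|split; [|split]]].
  - unfold Fd. replace (S (S m) - 1)%nat with (S m) by lia. rewrite E1, real_pow, Ev.
    unfold Cmult, Im; cbn [fst snd]. ring.
  - lra.
  - lra.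
  - right. rewrite E1, Cmod_sq. cbn [fst snd]. ring.
  - apply Gp_pos.
    + apply Cmod_pos_sq. rewrite Ev, Cmod_sq. cbn [fst snd].
      assert (0 < / (N + 1)) by (apply Rinv_0_lt_compat; lra). nra.
    + apply Cmod_pos_sq. rewrite Ev, Cmod_sq. unfold Cplus, RtoC. cbn [fst snd].
      assert (1 < / p).
      { assert (0 < / p) by (apply Rinv_0_lt_compat; lra).
        assert (p * / p = 1) by (field; lra). nra. }
      assert (/ (N + 1) < 1).
      { assert (0 < / (N + 1)) by (apply Rinv_0_lt_compat; lra).
        assert ((N + 1) * / (N + 1) = 1) by (field; lra). nra. }
      nra.
Qed.

Lemma v_casepos m p phi : 0 < p < 1 -> 0 < phi < PI / INR (S (S m)) ->
  let r := sin (phi * (INR (S (S m)) - 1)) / sin (phi * INR (S (S m))) in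
  let v := (RtoC (-1) + RtoC r * (RtoC (cos phi) + Ci * RtoC (sin phi)))%C in
  let tau := Cmod (Fd (S (S m)) v) ^ 2 in
  Im (Fd (S (S m)) v) = 0 /\ 0 < tau /\ t0sq (S m) <= tau /\
  (t0sq (S m) < tau \/ Cmod (1 + v)%C ^ 2 = ystar (S m) ^ 2) /\ 0 < Gp (S (S m)) p v.
Proof.
  intros Hp Hphi r v tau.
  set (N := INR (S m)).
  assert (HD : INR (S (S m)) = N + 1) by (unfold N; apply S_INR).
  assert (HN : 1 <= N) by (unfold N; apply (le_INR 1); lia).
  rewrite HD in Hphi.
  assert (Hphi2 : phi * (N + 1) < PI).
  { destruct Hphi as [_ H]. apply (Rmult_lt_compat_r (N + 1)) in H; [|lra].
    unfold Rdiv in H. rewrite Rmult_assoc, Rinv_l in H by lra. lra. }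
  set (s := sin phi). set (c := cos phi).
  set (Sn := sin (phi * N)). set (Cn := cos (phi * N)).
  set (Sd := sin (phi * (N + 1))).
  assert (Er : r = Sn / Sd).
  { unfold r. rewrite HD. replace (N + 1 - 1) with N by ring. reflexivity. }
  assert (Hs : 0 < s) by (unfold s; apply sin_gt_0; nra).
  assert (HSn : 0 < Sn) by (unfold Sn; apply sin_gt_0; nra).
  assert (HSd0 : 0 < Sd) by (unfold Sd; apply sin_gt_0; nra).
  assert (Hc : 0 < c).
  { unfold c. apply cos_gt_0; [| nra]. pose proof PI_RGT_0. nra. }
  assert (HSd : Sd = Sn * c + Cn * s).
  { unfold Sd, Sn, Cn, s, c. replace (phi * (N + 1)) with (phi * N + phi) by ring. apply sin_plus. }
  assert (Hsc : s ^ 2 + c ^ 2 = 1).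
  { unfold s, c. pose proof (sin2_cos2 phi). unfold Rsqr in H. simpl. lra. }
  assert (HsnC : Sn ^ 2 + Cn ^ 2 = 1).
  { unfold Sn, Cn. pose proof (sin2_cos2 (phi * N)). unfold Rsqr in H. simpl. lra. }
  assert (Hr : 0 < r) by (rewrite Er; apply Rdiv_lt_0_compat; lra).
  assert (Ev : v = (-1 + r * c, r * s)).
  { unfold v, Cplus, Cmult, RtoC, Ci. cbn [fst snd]. fold c s. f_equal; ring. }
  assert (E1 : (1 + v)%C = (r * cos phi, r * sin phi)).
  { rewrite Ev. unfold Cplus, RtoC. cbn [fst snd]. fold c s. f_equal; ring. }
  assert (HR : Cmod (1 + v)%C ^ 2 = r ^ 2).
  { rewrite E1, Cmod_sq. cbn [fst snd]. fold c s. replace ((r * c) ^ 2 + (r * s) ^ 2) with (r ^ 2 * (s ^ 2 + c ^ 2)) by ring.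
    rewrite Hsc. ring. }
  assert (Hv : Cmod v ^ 2 = (s / Sd) ^ 2).
  { rewrite Ev, Cmod_sq. cbn [fst snd]. rewrite Er.
    assert (Ex : (Sn * c - Sd) ^ 2 + (Sn * s) ^ 2 = s ^ 2 * (Sn ^ 2 + Cn ^ 2)).
    { rewrite HSd. ring. }
    rewrite HsnC in Ex.
    replace ((-1 + Sn / Sd * c) ^ 2 + (Sn / Sd * s) ^ 2) with (((Sn * c - Sd) ^ 2 + (Sn * s) ^ 2) / Sd ^ 2) by (field; lra).
    rewrite Ex. field. lra. }
  assert (Htau : tau = ((s / Sd) * r ^ S m) ^ 2).
  { unfold tau. rewrite Fd_mod, HR, Hv. rewrite <- pow_mult, Nat.mul_comm, pow_mult. ring. }
  assert (I1 : Sd <= (N + 1) * s).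
  { pose proof (sin_n_le (S (S m)) phi) as H. rewrite HD in H.
    assert (Hx : sin ((N + 1) * phi) = Sd) by (unfold Sd; f_equal; ring).
    rewrite Hx in H. fold s in H. rewrite !Rabs_right in H by lra. lra. }
  assert (I2 : N * Sd < (N + 1) * Sn).
  { rewrite HSd.
    assert (H1c : c <= 1) by (unfold c; apply COS_bound).
    destruct (Rle_lt_dec Cn 0) as [HC|HC].
    - assert (0 < N * s) by nra.
      assert (Cn * (N * s) <= 0) by nra.
      assert (0 < N * Sn) by nra.
      assert (N * Sn * c <= N * Sn) by nra.
      nra.
    - assert (X1 : phi * N * Cn < Sn).
      { unfold Cn, Sn. apply xcos_lt_sin. split; nra. }
      assert (X2 : s < phi) by (unfold s; apply sin_lt_x; lra).
      assert (N * Cn * s <= N * Cn * phi) by (apply Rmult_le_compat_l; nra).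
      assert (0 < N * Sn) by nra.
      assert (N * Sn * c <= N * Sn) by nra.
      assert (N * Sn * (1 - c) >= 0) by nra.
      nra. }
  assert (Hy : 0 < ystar (S m)) by (unfold ystar; fold N; apply Rdiv_lt_0_compat; lra).
  assert (Hry : ystar (S m) < r).
  { unfold ystar. fold N. rewrite Er. apply (Rmult_lt_reg_r ((N + 1) * Sd)); [nra|].
    replace (N / (N + 1) * ((N + 1) * Sd)) with (N * Sd) by (field; lra).
    replace (Sn / Sd * ((N + 1) * Sd)) with ((N + 1) * Sn) by (field; lra). exact I2. }
  assert (Hsd : / (N + 1) <= s / Sd).
  { apply (Rmult_le_reg_r ((N + 1) * Sd)); [nra|].
    replace (/ (N + 1) * ((N + 1) * Sd)) with Sd by (field; lra).
    replace (s / Sd * ((N + 1) * Sd)) with ((N + 1) * s) by (field; lra). exact I1. }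
  assert (Hpw : ystar (S m) ^ S m < r ^ S m) by (apply pow_lt_strict; lra).
  assert (Hpy : 0 < ystar (S m) ^ S m) by (apply pow_lt; lra).
  assert (Hlt : ystar (S m) ^ S m / (N + 1) < (s / Sd) * r ^ S m).
  { unfold Rdiv at 1. rewrite Rmult_comm.
    assert (0 < / (N + 1)) by (apply Rinv_0_lt_compat; lra). nra. }
  assert (Ht0 : t0sq (S m) < tau).
  { rewrite Htau. unfold t0sq. fold N.
    assert (0 < ystar (S m) ^ S m / (N + 1)) by (apply Rdiv_lt_0_compat; lra).
    apply (pow_lt_strict 1); lra. }
  assert (Ht00 : 0 <= t0sq (S m)) by (unfold t0sq; apply pow2_ge_0).
  split; [|split; [|split; [|split]]].
  - unfold Fd. replace (S (S m) - 1)%nat with (S m) by lia. rewrite E1, de_moivre.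
    rewrite Ev. unfold Cmult, Im. cbn [fst snd]. fold N.
    rewrite (Rmult_comm N phi). fold Sn Cn.
    assert (Hk : r * (Sn * c + Cn * s) = Sn) by (rewrite <- HSd, Er; field; lra).
    fold c s.
    transitivity (r ^ S m * (r * (Sn * c + Cn * s) - Sn)); [ring|]. rewrite Hk. ring.
  - lra.
  - lra.
  - left; exact Ht0.
  - apply Gp_pos.
    + apply Cmod_pos_sq. rewrite Hv. apply pow_lt. apply Rdiv_lt_0_compat; lra.
    + apply Cmod_pos_sq. rewrite Ev, Cmod_sq. unfold Cplus, RtoC. cbn [fst snd].
      assert (1 < / p).
      { assert (0 < / p) by (apply Rinv_0_lt_compat; lra).
        assert (p * / p = 1) by (field; lra). nra. }
      assert (0 < r * c) by nra.
      assert (0 < / p + (-1 + r * c)) by lra.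
      assert (0 <= (0 + r * s) ^ 2) by apply pow2_ge_0.
      nra.
Qed.

Lemma conj_or (u v : C) : Cmod (1 + u)%C ^ 2 = Cmod (1 + v)%C ^ 2 -> Cmod u ^ 2 = Cmod v ^ 2 ->
  u = v \/ u = Cconj v.
Proof.
  destruct u as [a b], v as [c d]. rewrite !Cmod_sq. unfold Cplus, RtoC, Cconj. cbn [fst snd].
  intros H1 H2. assert (a = c) by nra. subst c.
  assert (Hm : (b - d) * (b + d) = 0) by nra.
  destruct (Rmult_integral _ _ Hm) as [H|H]; [left|right]; f_equal; lra.
Qed.

Theorem lemma5p6 (p : R) (d : nat) :
  0 < p < 1 -> (2 <= d)%nat ->
  forall phi : R, 0 <= phi < PI / INR d ->
  let v := gamma1 d phi in
  Im (Fd d v) = 0 /\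
  (forall u : C, Fd d u = Fd d v -> u <> v -> u <> Cconj v ->
     Gp d p u <> Gp d p v).
Proof.
  intros Hp Hd phi Hphi v.
  destruct d as [|[|m]]; try lia.
  assert (HV : Im (Fd (S (S m)) v) = 0 /\ 0 < Cmod (Fd (S (S m)) v) ^ 2 /\
     t0sq (S m) <= Cmod (Fd (S (S m)) v) ^ 2 /\
     (t0sq (S m) < Cmod (Fd (S (S m)) v) ^ 2 \/ Cmod (1 + v)%C ^ 2 = ystar (S m) ^ 2) /\
     0 < Gp (S (S m)) p v).
  { unfold v, gamma1. destruct (Req_EM_T phi 0) as [E|Hne].
    - exact (v_case0 m p Hp).
    - assert (Hpos : 0 < phi < PI / INR (S (S m))).
      { destruct Hphi as [H1 H2]. split; [|exact H2].
        destruct (Rle_lt_or_eq_dec 0 phi H1) as [|E]; [assumption|]. exfalso; apply Hne; symmetry; exact E. }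
      exact (v_casepos m p phi Hp Hpos). }
  destruct HV as [HIm [Htau [Ht0 [Hor HGv]]]].
  split; [exact HIm|].
  intros u Hu Huv Huc HG.
  set (tau := Cmod (Fd (S (S m)) v) ^ 2) in *.
  set (a := / p - 1).
  assert (Ha : 0 < a).
  { unfold a. assert (0 < / p) by (apply Rinv_0_lt_compat; lra).
    assert (p * / p = 1) by (field; lra). nra. }
  assert (Hu2 : Cmod (Fd (S (S m)) u) ^ 2 = tau) by (unfold tau; rewrite Hu; reflexivity).
  assert (HGu : 0 < Gp (S (S m)) p u) by (rewrite HG; exact HGv).
  destruct (lnG m p a tau v (proj1 Hp) eq_refl Ha Htau eq_refl HGv) as [NFv Ev].
  destruct (lnG m p a tau u (proj1 Hp) eq_refl Ha Htau Hu2 HGu) as [NFu Eu].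
  destruct (bridge m a tau u Ha Htau Hu2) as [HRu [Hzu _]].
  destruct (bridge m a tau v Ha Htau eq_refl) as [HRv [Hzv _]].
  destruct (Req_dec (Cmod (1 + u)%C ^ 2) (Cmod (1 + v)%C ^ 2)) as [Heq|Hne].
  - assert (Hm : Cmod u ^ 2 = Cmod v ^ 2) by (rewrite Hzu, Hzv, Heq; reflexivity).
    destruct (conj_or u v Heq Hm); contradiction.
  - apply (Psi_inj m a tau _ _ Ha Htau Ht0 HRu HRv NFu NFv Hne Hor).
    rewrite HG in Eu. lra.
Qed.
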